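(* Let $\succ=(\succ_s)_{s\in S}$ be a priority profile in which every $\succ_s$ is a partial order on $I$, and let $\mu$ be a stable matching for $\succ$. Define the profile $\succ^\mu=(\succ^\mu_s)_{s\in S}$ by $\succ^\mu_s=\succ_s\cup\{(i,j)\in I\times I:\ \mu(i)=s\ \text{and}\ sP_j\mu(j)\}$. Then $$f^{\succ}\cap\big(d(\mu)\cup\{\mu\}\big)=\bigcup_{\succ'\in\mathcal{E}(\succ^\mu)}\{EA(\succ,\succ')\},$$ where $d(\mu)$ is the set of matchings that Pareto dominate $\mu$.
   Context: A partial order on $I$ is an asymmetric and transitive relation; a total order is a partial order that is also negatively transitive and complete. School choice setup: $I$ finite set of students ($|I|\ge 3$), $S$ finite set of schools; each student $i$ has a total order $P_i$ on $S\cup\{\emptyset\}$ ($sR_is'$ means $sP_is'$ or $s=s'$); each school $s$ has capacity $q_s\in\mathbb{Z}_{++}$ and an asymmetric priority relation $\succ_s$ on $I$. A matching $\mu$ assigns each $i$ to $\mu(i)\in S\cup\{\emptyset\}$ with $|\mu(s)|\le q_s$, $\mu(s)=\{i:\mu(i)=s\}$. $\mu$ is stable for $\succ$ if individually rational ($\mu(i)R_i\emptyset$), non-wasteful ($sP_i\mu(i)$ implies $|\mu(s)|=q_s$) and fair (no $s$, $j\in\mu(s)$, $i\notin\mu(s)$ with $sR_i\mu(i)$ and $(i,j)\in\succ_s$). Pareto dominance: $\mu'(i)R_i\mu(i)$ for all $i$, strict for some $i$. An SOSM for $\succ$ is a stable matching not Pareto dominated by any stable matching; $f^\succ$ is the set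 of SOSMs. An extension of an asymmetric relation $\succ_s$ is a total order on $I$ containing it; for a profile $\rhd=(\rhd_s)$, $\mathcal{E}(\rhd)$ is the set of profiles of extensions of the $\rhd_s$. For a profile of total orders the SOSM is unique (student-proposing deferred acceptance outcome). EADAM (Tang–Yu version): given $\succ$ and a profile $\succ'$ of total orders extending $\succ$, Round 0: compute the SOSM for $\succ'$. Round $k\ge1$: (1) with respect to the current problem and the matching of Round $k-1$, call a remaining school $s$ underdemanded if no remaining student $i$ has $sP_i\mu(i)$; fix the assignments at underdemanded schools, and remove these schools, the students matched to them, and the remaining students who are unmatched; (2) for each removed student $i$ and each remaining school $s$ with $sP_i(\text{assignment of }i)$, and each remaining student $j$ with $(i,j)\in\succ_s$, delete $s$ from $j$'s preference list; (3) compute the SOSM for the subproblem of remaining schools and students, with modified preferences and priorities $\succ'$ restricted. Stop when all schools are removed; $EA(\succ,\succ')$ denotes the matching given by all fixed assignments. *)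

(* Defs.v *)
From mathcomp Require Import all_boot.

Set Implicit Arguments.
Unset Strict Implicit.
Unset Printing Implicit Defensive.

(* Students: finType I; schools: finType S; the "null school"
   (being unassigned) is None : option S. *)

Section Orders.
Variable T : finType.
Definition asym_rel (r : rel T) := forall x y, r x y -> ~~ r y x.
Definition trans_rel (r : rel T) := forall x y z, r x y -> r y z -> r x z.
Definition partial_order (r : rel T) := asym_rel r /\ trans_rel r.
Definition total_order (r : rel T) :=
  [/\ partial_order r,
      (forall x y z, ~~ r x y -> ~~ r y z -> ~~ r x z) &
      (forall x y, x != y -> r x y || r y x)].
Definition extension (r r' : rel T) := total_order r' /\ (forall x y, r x y -> r' x y).
End Orders.

Section School.
Variables (I S : finType) (P : I -> rel (option S)) (q : S -> nat).

Definition Rw (i : I) (x y : option S) := P i x y || (x == y).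

Definition load (Is : {set I}) (mu : {ffun I -> option S}) (s : S) :=
  #|[set i in Is | mu i == Some s]|.

(* Generic (sub)problem: remaining students Is, remaining schools Ss,
   A i s = false means s has been deleted from i's preference list. *)
Definition sub_matching (Is : {set I}) (Ss : {set S}) (mu : {ffun I -> option S}) :=
  [/\ (forall i, i \notin Is -> mu i = None),
      (forall i s, mu i = Some s -> s \in Ss) &
      (forall s, s \in Ss -> load Is mu s <= q s)].

Definition sub_stable (pri : S -> rel I) (Is : {set I}) (Ss : {set S})
    (A : I -> S -> bool) (mu : {ffun I -> option S}) :=
  [/\ sub_matching Is Ss mu,
      (forall i s, i \in Is -> mu i = Some s -> A i s /\ P i (Some s) None),
      (forall i s, i \in Is -> s \in Ss -> A i s -> P i (Some s) (mu i) ->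
                   load Is mu s = q s) &
      (forall i j s, i \in Is -> j \in Is -> s \in Ss -> A i s ->
         mu j = Some s -> mu i != Some s -> Rw i (Some s) (mu i) ->
         pri s i j -> False)].

Definition sub_dominates (Is : {set I}) (mu' mu : {ffun I -> option S}) :=
  (forall i, i \in Is -> Rw i (mu' i) (mu i)) /\
  (exists2 i, i \in Is & P i (mu' i) (mu i)).

Definition sub_SOSM (pri : S -> rel I) (Is : {set I}) (Ss : {set S}) (A : I -> S -> bool) (mu : {ffun I -> option S}) :=
  sub_stable pri Is Ss A mu /\
  (forall mu', sub_stable pri Is Ss A mu' -> ~ sub_dominates Is mu' mu).

Definition allA : I -> S -> bool := fun _ _ => true.
Definition matching (mu : {ffun I -> option S}) := sub_matching setT setT mu.
Definition stable (pri : S -> rel I) (mu : {ffun I -> option S}) := sub_stable pri setT setT allA mu.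
Definition dominates (mu' mu : {ffun I -> option S}) := sub_dominates setT mu' mu.
(* mu \in f^pri *)
Definition SOSM (pri : S -> rel I) (mu : {ffun I -> option S}) := sub_SOSM pri setT setT allA mu.
(* mu' \in d(mu) *)
Definition in_d (mu mu' : {ffun I -> option S}) := matching mu' /\ dominates mu' mu.

Definition mu_profile (pri : S -> rel I) (mu : {ffun I -> option S}) : S -> rel I :=
  fun s i j => pri s i j || ((mu i == Some s) && P j (Some s) (mu j)).

Definition in_ext (rhd pri' : S -> rel I) := forall s, extension (rhd s) (pri' s).

Section EADAM.
Variables (pri pri' : S -> rel I).

Definition underdemanded (Ir : {set I}) (Sr : {set S}) (A : I -> S -> bool)
    (mu : {ffun I -> option S}) : {set S} :=
  [set s in Sr | [forall i in Ir, ~~ (A i s && P i (Some s) (mu i))]].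

Definition removed (Ir : {set I}) (Sr : {set S}) (A : I -> S -> bool)
    (mu : {ffun I -> option S}) : {set I} :=
  [set i in Ir | (mu i == None) ||
                 [exists s in underdemanded Ir Sr A mu, mu i == Some s]].

Definition new_allowed (Ir : {set I}) (Sr : {set S}) (A : I -> S -> bool) (mu : {ffun I -> option S}) : I -> S -> bool :=
  fun j s => A j s &&
    [forall i in removed Ir Sr A mu, ~~ [&& A i s, P i (Some s) (mu i) & pri s i j]].

Definition fix_assign (Ir : {set I}) (Sr : {set S}) (A : I -> S -> bool) (mu nu : {ffun I -> option S}) : {ffun I -> option S} :=
  [ffun i => if i \in removed Ir Sr A mu then mu i else nu i].

(* ea_from Ir Sr A mu nu res : starting a round k >= 1 with remaining students Ir,
   remaining schools Sr, current (modified) lists A, matching mu of round k-1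
   and fixed assignments nu so far, the algorithm ends with result res. *)
Inductive ea_from : {set I} -> {set S} -> (I -> S -> bool) ->
    {ffun I -> option S} -> {ffun I -> option S} -> {ffun I -> option S} -> Prop :=
| ea_stop Ir Sr A mu nu :
    Sr = set0 ->
    ea_from Ir Sr A mu nu [ffun i => if i \in Ir then mu i else nu i]
| ea_step Ir Sr A mu nu mu' res :
    Sr != set0 ->
    sub_SOSM pri' (Ir :\: removed Ir Sr A mu) (Sr :\: underdemanded Ir Sr A mu)
             (new_allowed Ir Sr A mu) mu' ->
    ea_from (Ir :\: removed Ir Sr A mu) (Sr :\: underdemanded Ir Sr A mu)
            (new_allowed Ir Sr A mu) mu' (fix_assign Ir Sr A mu nu) res ->
    ea_from Ir Sr A mu nu res.

Definition EA (res : {ffun I -> option S}) :=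
  exists mu0, sub_SOSM pri' setT setT allA mu0 /\
              ea_from setT setT allA mu0 [ffun => None] res.
End EADAM.
End School.

(* Main.v *)
Require Import Defs.
From mathcomp Require Import all_boot.
Set Implicit Arguments.
Unset Strict Implicit.
Unset Printing Implicit Defensive.

Section Generic.
Variable T : finType.
Variable r : rel T.
Hypothesis rpo : partial_order r.
Hypothesis rtot : forall x y, x != y -> r x y || r y x.

Lemma r_irr x : ~~ r x x.
Proof. by case: rpo => asy _; apply/negP => h; move: (asy _ _ h); rewrite h. Qed.

Lemma exists_top (X : pred T) x0 : X x0 ->
  exists2 x, X x & forall y, X y -> y != x -> r x y.
Proof.
move=> X0.
case: (arg_minnP (fun x => #|[set y | X y && r y x]|) X0) => x Xx Hmin.
exists x => // y Xy nyx.
case/orP: (rtot nyx) => // ryx; exfalso.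
have: #|[set z | X z && r z y]| < #|[set z | X z && r z x]|.
  apply: proper_card; apply/properP; split.
    apply/subsetP => z; rewrite !inE => /andP[-> rzy] /=.
    by case: rpo => _ tr; apply: tr rzy ryx.
  by exists y; rewrite !inE ?Xy ?ryx ?(negbTE (r_irr y)).
by rewrite ltnNge Hmin.
Qed.

Lemma exists_bot (X : pred T) x0 : X x0 ->
  exists2 x, X x & forall y, X y -> y != x -> r y x.
Proof.
move=> X0.
case: (arg_minnP (fun x => #|[set y | X y && r x y]|) X0) => x Xx Hmin.
exists x => // y Xy nyx.
case/orP: (rtot nyx) => // ryx; exfalso.
have: #|[set z | X z && r y z]| < #|[set z | X z && r x z]|.
  apply: proper_card; apply/properP; split.
    apply/subsetP => z; rewrite !inE => /andP[-> rzy] /=.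
    by case: rpo => _ tr; apply: tr ryx rzy.
  by exists y; rewrite !inE ?Xy ?ryx ?(negbTE (r_irr y)).
by rewrite ltnNge Hmin.
Qed.

Definition above (X : {set T}) x := #|[set y in X | r y x]|.

Lemma rank_lemma n (X : {set T}) :
  minn n #|X| <= #|[set x in X | above X x < n]|.
Proof.
elim: n X => [|n IH] X; first by rewrite min0n.
case: (set_0Vmem X) => [->|[x0 Xx0]]; first by rewrite cards0 minn0.
case: (exists_top (X := fun z => z \in X) Xx0) => x Xx Htop.
set X' := X :\ x.
have abX y : y \in X' -> above X y = (above X' y).+1.
  move=> yX'. rewrite /above (cardsD1 x [set z in X | r z y]) inE Xx.
  move: yX'; rewrite !inE => /andP[nyx yX]; rewrite (Htop y yX nyx) /=.
  rewrite add1n; congr (_.+1); apply: eq_card => z; rewrite !inE.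
  by rewrite andbA.
have -> : [set z in X | above X z < n.+1] = x |: [set z in X' | above X' z < n].
  apply/setP => z; rewrite !inE.
  case: (eqVneq z x) => [->|nzx] /=.
    have -> : above X x = 0.
      apply/eqP; rewrite /above cards_eq0; apply/eqP/setP => y.
      rewrite !inE; apply/negbTE; apply/negP => /andP[yX ryx].
      case: (eqVneq y x) => [e|nyx]; first by move: ryx; rewrite e (negbTE (r_irr x)).
      by case: rpo => asy _; move: (asy _ _ ryx); rewrite Htop.
    by rewrite Xx.
  case zX: (z \in X) => //=.
  by rewrite abX ?inE ?nzx ?zX // ltnS.
rewrite cardsU1 !inE eqxx /=.
have := IH X'. rewrite (cardsD1 x X) Xx /= -/X'.
by rewrite add1n minnSS.
Qed.
End Generic.

Section SumLemmas.
Variable T : finType.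
Lemma sum_eq_of_le (A : {set T}) (f g : T -> nat) :
  (forall s, s \in A -> f s <= g s) ->
  \sum_(s in A) g s <= \sum_(s in A) f s ->
  forall s, s \in A -> f s = g s.
Proof.
move=> le hsum s sA; apply/eqP; rewrite eqn_leq le //=; apply/negP => lt.
have: \sum_(t in A) f t < \sum_(t in A) g t.
  rewrite (bigD1 s) //= [X in _ < X](bigD1 s) //=.
  rewrite -addSn; apply: leq_add; first by rewrite ltnNge; apply/negP.
  by apply: leq_sum => t /andP[tA _]; apply: le.
by rewrite ltnNge hsum.
Qed.
End SumLemmas.

Require Import Defs.
From mathcomp Require Import all_boot.
Set Implicit Arguments.
Unset Strict Implicit.
Unset Printing Implicit Defensive.

Section Pbasics.
Variables (I S : finType) (P : I -> rel (option S)) (q : S -> nat).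
Hypothesis HP : forall i, total_order (P i).

Lemma P_asym i x y : P i x y -> ~~ P i y x.
Proof. by case: (HP i) => [[a _] _ _]; apply: a. Qed.
Lemma P_irr i x : ~~ P i x x.
Proof. by apply/negP => h; move: (P_asym h); rewrite h. Qed.
Lemma P_trans i x y z : P i x y -> P i y z -> P i x z.
Proof. by case: (HP i) => [[_ t] _ _]; apply: t. Qed.
Lemma P_tot i x y : x != y -> P i x y || P i y x.
Proof. by case: (HP i) => _ _ t; apply: t. Qed.
Lemma Rw_refl i x : Rw P i x x.
Proof. by rewrite /Rw eqxx orbT. Qed.
Lemma Rw_P i x y : Rw P i x y -> x != y -> P i x y.
Proof. by rewrite /Rw => /orP[//|/eqP ->]; rewrite eqxx. Qed.
Lemma Rw_P_trans i x y z : Rw P i x y -> P i y z -> P i x z.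
Proof. by rewrite /Rw => /orP[h1 h2|/eqP -> //]; apply: P_trans h1 h2. Qed.
Lemma P_Rw_trans i x y z : P i x y -> Rw P i y z -> P i x z.
Proof. by move=> h1; rewrite /Rw => /orP[h2|/eqP <- //]; apply: P_trans h1 h2. Qed.
Lemma Rw_trans i x y z : Rw P i x y -> Rw P i y z -> Rw P i x z.
Proof.
move=> h1 /orP[h2|/eqP <- //]; apply/orP; left; apply: Rw_P_trans h1 h2.
Qed.
Lemma P_Rw i x y : P i x y -> Rw P i x y.
Proof. by rewrite /Rw => ->. Qed.
Lemma notP_Rw i x y : ~~ P i x y -> Rw P i y x.
Proof.
move=> h; case: (eqVneq x y) => [->|nxy]; first exact: Rw_refl.
by case/orP: (P_tot i nxy) => h'; [move: h; rewrite h'|apply: P_Rw].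
Qed.
Lemma Rw_notP i x y : Rw P i x y -> ~~ P i y x.
Proof.
by move/orP=> [h|/eqP ->]; [apply: P_asym|apply: P_irr].
Qed.
Lemma P_neq i x y : P i x y -> x != y.
Proof. by move=> h; apply/eqP => e; move: h; rewrite e (negbTE (P_irr _ _)). Qed.
Lemma Rw_antisym i x y : Rw P i x y -> Rw P i y x -> x = y.
Proof.
move=> h1 h2; apply/eqP; apply/negP => /negP n.
by move: (Rw_notP h2); rewrite (Rw_P h1 n).
Qed.

Lemma to_asym (T : finType) (r : rel T) : total_order r -> forall x y, r x y -> ~~ r y x.
Proof. by case=> [[a _] _ _]. Qed.
Lemma to_trans (T : finType) (r : rel T) : total_order r -> forall x y z, r x y -> r y z -> r x z.
Proof. by case=> [[_ t] _ _]. Qed.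
Lemma to_tot (T : finType) (r : rel T) : total_order r -> forall x y, x != y -> r x y || r y x.
Proof. by case. Qed.
Lemma to_irr (T : finType) (r : rel T) : total_order r -> forall x, ~~ r x x.
Proof. by move=> h x; apply/negP => e; move: (to_asym h e); rewrite e. Qed.
End Pbasics.

Section DA.
Variables (I S : finType) (P : I -> rel (option S)) (q : S -> nat).
Hypothesis HP : forall i, total_order (P i).
Variables (pr : S -> rel I) (Is : {set I}) (Ss : {set S}) (A : I -> S -> bool).
Hypothesis Hpr : forall s, total_order (pr s).

Definition acc (R : {set I * S}) i s :=
  [&& i \in Is, s \in Ss, A i s, P i (Some s) None & (i, s) \notin R].
Definition best R i s := acc R i s && [forall t, acc R i t ==> Rw P i (Some s) (Some t)].
Definition prop R i : option S := [pick s | best R i s].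
Definition propsS R s := [set j | prop R j == Some s].
Definition rej R := [set p : I * S | (prop R p.1 == Some p.2) &&
   (q p.2 <= #|[set j in propsS R p.2 | pr p.2 j p.1]|)].

Lemma Si_po i : partial_order (fun s t : S => P i (Some s) (Some t)).
Proof. split=> [x y|x y z]; [apply: (P_asym HP)|apply: (P_trans HP)]. Qed.
Lemma Si_tot i (x y : S) : x != y -> P i (Some x) (Some y) || P i (Some y) (Some x).
Proof. by move=> n; apply: (P_tot HP) => //; apply: contra n => /eqP [->]. Qed.

Lemma propP R i s : prop R i = Some s -> best R i s.
Proof. by rewrite /prop; case: pickP => // x h [<-]. Qed.
Lemma propN R i : prop R i = None -> forall s, ~~ acc R i s.
Proof.
rewrite /prop; case: pickP => // h _ s; apply/negP => a.
case: (exists_top (Si_po i) (@Si_tot i) (X := acc R i) a) => t at_ ht.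
move: (h t); rewrite /best at_ /=; move/negbT/negP; apply.
apply/forallP => u; apply/implyP => au.
case: (eqVneq u t) => [->|nut]; [exact: Rw_refl|apply: P_Rw; exact: ht].
Qed.

Lemma prop_Is R i : i \notin Is -> prop R i = None.
Proof.
move=> ni; case e: (prop R i) => [s|] //; move: (propP e).
by rewrite /best /acc (negbTE ni).
Qed.

Lemma prop_best R i s t : prop R i = Some s -> acc R i t -> Rw P i (Some s) (Some t).
Proof. by move/propP => /andP[_ /forallP h] a; move: (h t); rewrite a. Qed.

Lemma prop_opt R i t : acc R i t -> Rw P i (prop R i) (Some t).
Proof.
case e: (prop R i) => [s|] a; first exact: prop_best e a.
by move: (propN e t); rewrite a.
Qed.

Definition Inv2 (R : {set I * S}) := forall i s, (i, s) \in R ->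
  forall m, sub_stable P q pr Is Ss A m -> m i != Some s.
Definition Inv3 (R : {set I * S}) := forall i s, (i, s) \in R ->
  q s <= #|[set j in propsS R s | pr s j i]|.

Definition stepR R := R :|: rej R.

Lemma rej_notin R p : p \in rej R -> p \notin R.
Proof.
case: p => i s; rewrite inE /= => /andP[/eqP h _].
by move: (propP h) => /andP[/and5P[_ _ _ _ ->] _].
Qed.

Lemma prop_step R j s : prop R j = Some s -> (j, s) \notin rej R ->
  prop (stepR R) j = Some s.
Proof.
move=> h nr.
have ea : forall t, acc (stepR R) j t = acc R j t.
  move=> t; rewrite /acc /stepR inE negb_or.
  case: (boolP ((j, t) \in rej R)) => [jt|]; last by rewrite andbT.
  by move: (jt); rewrite inE /= h => /andP[/eqP [e] _]; move: nr; rewrite e jt.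
rewrite -h /prop; apply: eq_pick => t; rewrite /best ea; congr andb.
by apply: eq_forallb => u; rewrite ea.
Qed.

Lemma Inv3_step R : Inv3 R -> Inv3 (stepR R).
Proof.
move=> I3 i s irs.
set X := propsS R s.
have base : q s <= #|[set j in X | pr s j i]|.
  move: irs; rewrite /stepR inE => /orP[h|]; first exact: I3.
  by rewrite inE /= => /andP[_ ->].
have Xq : q s <= #|X|.
  apply: leq_trans base _; apply: subset_leq_card; apply/subsetP => j.
  by rewrite inE => /andP[].
have po : partial_order (pr s) by case: (Hpr s).
have K := rank_lemma po (to_tot (Hpr s)) (q s) X.
rewrite (minn_idPl Xq) in K.
apply: leq_trans K _; apply: subset_leq_card; apply/subsetP => j.
rewrite !inE => /andP[jX ab].
have jnr : (j, s) \notin rej R.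
  by rewrite inE /= negb_and -ltnNge; apply/orP; right; exact: ab.
move/eqP: (jX) => pj.
rewrite (prop_step pj jnr) eqxx /=.
apply/negPn/negP => nji; move: ab; rewrite ltnNge; move/negP; apply.
apply: leq_trans base _; apply: subset_leq_card; apply/subsetP => k.
rewrite !inE => /andP[kX rki]; rewrite kX /=.
case: (eqVneq j i) => [->//|nji'].
case/orP: (to_tot (Hpr s) nji') => h; first by rewrite h in nji.
exact: (to_trans (Hpr s)) rki h.
Qed.

Lemma match_Is m i s : sub_stable P q pr Is Ss A m -> m i = Some s -> i \in Is.
Proof.
case=> [[out _ _] _ _ _] h; apply/negPn/negP => ni.
by move: (out i ni); rewrite h.
Qed.

Lemma Inv2_step R : Inv2 R -> Inv3 R -> Inv2 (stepR R).
Proof.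
move=> I2 I3 i s irs m ms; move: irs; rewrite /stepR inE => /orP[h|h]; first exact: I2.
apply/eqP => mis.
move: h; rewrite inE /= => /andP[/eqP pis hq].
set T := [set j in propsS R s | pr s j i] in hq.
have [j jT mj] : exists2 j, j \in T & m j != Some s.
  apply/exists_inP; apply/contraT => /exists_inPn hall.
  case: (ms) => [[_ _ cap] _ _ _].
  have iI := match_Is ms mis.
  have sS : s \in Ss by case: (ms) => [[_ ins _] _ _ _]; apply: ins mis.
  have: #|T| < load Is m s.
    rewrite /load [X in _ < X](cardsD1 i).
    have -> : i \in [set k in Is | m k == Some s] by rewrite inE iI mis eqxx.
    rewrite add1n ltnS.
    apply: subset_leq_card; apply/subsetP => k kT.
    have := hall k kT; rewrite negbK => /eqP mk.
    rewrite !inE mk eqxx andbT.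
    move: kT; rewrite inE => /andP[_ rki].
    rewrite (match_Is ms mk) andbT.
    by apply/eqP => e; move: rki; rewrite e (negbTE (to_irr (Hpr s) i)).
  by move=> lt; move: (leq_trans (cap s sS) hq); rewrite leqNgt lt.
move: jT; rewrite !inE => /andP[/eqP pj rji].
have := propP pj; rewrite /best /acc => /andP[/and5P[jI sS Ajs Pjs _] _].
have Pm : P j (Some s) (m j).
  case e: (m j) => [t|] //.
  case: (ms) => [_ ir _ _]; case: (ir j t jI e) => Ajt Pjt.
  have tS : t \in Ss by case: (ms) => [[_ ins _] _ _ _]; apply: ins e.
  have ajt : acc R j t.
    by rewrite /acc jI tS Ajt Pjt /=; apply/negP => jtR; move: (I2 _ _ jtR m ms); rewrite e eqxx.
  apply: Rw_P (prop_best pj ajt) _; apply: contra mj; rewrite e => /eqP [->] //.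
case: (ms) => [_ _ _ fair].
apply: (fair j i s jI (match_Is ms mis) sS Ajs mis mj (P_Rw Pm) rji).
Qed.

Definition Rn n := iter n stepR set0.

Lemma Rn_inv n : Inv2 (Rn n) /\ Inv3 (Rn n).
Proof.
elim: n => [|n [I2 I3]]; first by split => i s; rewrite inE.
by split; [apply: Inv2_step|apply: Inv3_step].
Qed.

Lemma Rn_grow n : (forall k, k < n -> ~~ (rej (Rn k) \subset Rn k)) -> n <= #|Rn n|.
Proof.
elim: n => // n IH h.
have h1 : n <= #|Rn n| by apply: IH => k kn; apply: h; apply: ltnW.
apply: leq_ltn_trans h1 _; rewrite /= /stepR; apply: proper_card; apply/properP; split.
  exact: subsetUl.
have := h n (ltnSn n); case/subsetPn => p pr' pn; exists p => //.
by rewrite inE pr' orbT.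
Qed.

Lemma DA_fix : exists R, [/\ Inv2 R, Inv3 R & rej R = set0].
Proof.
have [k hk] : exists k : 'I_#|{: I * S}|.+1, rej (Rn k) \subset Rn k.
  apply/existsP; apply/contraT => /existsPn h.
  have := Rn_grow (n := #|{: I * S}|.+1) (fun k kn => h (Ordinal kn)).
  by rewrite ltnNge max_card.
exists (Rn k); case: (Rn_inv k) => I2 I3; split => //.
apply/eqP; rewrite -subset0; apply/subsetP => p pr'.
by move: (rej_notin pr'); rewrite (subsetP hk p pr').
Qed.

Lemma DA_opt : exists d, sub_stable P q pr Is Ss A d /\
  forall m, sub_stable P q pr Is Ss A m -> forall i, Rw P i (d i) (m i).
Proof.
case: DA_fix => R [I2 I3 r0].
pose d := [ffun i => prop R i].
have dE i : d i = prop R i by rewrite ffunE.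
have loadE s : [set i in Is | d i == Some s] = propsS R s.
  apply/setP => i; rewrite !inE dE; case e: (prop R i) => [t|]; last by rewrite andbF.
  by move: (propP e) => /andP[/and5P[-> _ _ _ _] _].
have cap s : load Is d s <= q s.
  rewrite /load loadE leqNgt; apply/negP => lt.
  have: (0 < #|propsS R s|) by apply: leq_ltn_trans lt.
  rewrite card_gt0 => /set0Pn [j0 j0X].
  have po : partial_order (pr s) by case: (Hpr s).
  case: (exists_bot po (to_tot (Hpr s)) (X := fun x => x \in propsS R s) j0X) => j jX hj.
  have: (j, s) \in rej R.
    rewrite inE /=; move: (jX); rewrite inE => -> /=.
    rewrite -ltnS; apply: leq_trans lt _.
    rewrite (cardsD1 j (propsS R s)) jX add1n ltnS; apply: subset_leq_card; apply/subsetP => k.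
    move=> /setD1P [nkj kX]; rewrite inE kX /=; exact: hj.
  by rewrite r0 inE.
have inR i s : i \in Is -> s \in Ss -> A i s -> P i (Some s) (d i) -> (i, s) \in R.
  move=> iI sS Ais Pis; apply/negPn/negP => nR.
  have a : acc R i s.
    rewrite /acc iI sS Ais nR andbT /=.
    move: Pis; rewrite dE; case e: (prop R i) => [t|] // Pst.
    move: (propP e) => /andP[/and5P[_ _ _ Pt _] _]; exact: (P_trans HP) Pst Pt.
  by move: (Rw_notP HP (prop_opt a)); rewrite -dE Pis.
have dst : sub_stable P q pr Is Ss A d.
  split.
  - split => [i ni|i s|s _]; rewrite ?dE.
    + exact: prop_Is.
    + by move/propP => /andP[/and5P[_ -> _ _ _] _].
    + exact: cap.
  - move=> i s _; rewrite dE => /propP /andP[/and5P[_ _ -> -> _] _] //.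
  - move=> i s iI sS Ais Pis; apply/eqP; rewrite eqn_leq cap /=.
    apply: leq_trans (I3 _ _ (inR _ _ iI sS Ais Pis)) _.
    rewrite /load loadE; apply: subset_leq_card; apply/subsetP => k; rewrite inE.
    by case/andP.
  - move=> i j s iI jI sS Ais djs dis Rw' rij.
    have dis' : Some s != d i by rewrite eq_sym.
    have iR := inR _ _ iI sS Ais (Rw_P Rw' dis').
    have := I3 _ _ iR; set T := [set _ in _ | _] => hT.
    have : #|T| < load Is d s.
      rewrite /load loadE (cardsD1 j (propsS R s)) inE -dE djs eqxx add1n ltnS.
      apply: subset_leq_card; apply/subsetP => k; rewrite !inE => /andP[kX rki].
      rewrite kX andbT; apply/eqP => e; move: rki; rewrite e.
      by move/(to_asym (Hpr s)); rewrite rij.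
    by move=> lt; move: (leq_trans (cap s) hT); rewrite leqNgt lt.
exists d; split => // m ms i.
case e: (m i) => [t|].
  have iI := match_Is ms e.
  have tS : t \in Ss by case: (ms) => [[_ ins _] _ _ _]; apply: ins e.
  case: ms (ms) => [_ ir _ _] ms; case: (ir i t iI e) => Ait Pit.
  rewrite dE; apply: prop_opt; rewrite /acc iI tS Ait Pit /=.
  by apply/negP => itR; move: (I2 _ _ itR m ms); rewrite e eqxx.
rewrite dE; case e': (prop R i) => [s|]; last exact: Rw_refl.
by move: (propP e') => /andP[/and5P[_ _ _ Ps _] _]; apply: P_Rw.
Qed.

Lemma SOSM_opt m : sub_SOSM P q pr Is Ss A m ->
  forall m2, sub_stable P q pr Is Ss A m2 -> forall i, Rw P i (m i) (m2 i).
Proof.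
case=> ms nd m2 m2s i.
case: DA_opt => d [ds dopt].
suff -> : m = d by apply: dopt.
apply/ffunP => k; apply/eqP; apply/negPn/negP => nk.
apply: (nd d ds); split; first by move=> k' _; apply: dopt.
exists k; last by apply: Rw_P; [apply: dopt|rewrite eq_sym].
apply/negPn/negP => nkI.
by case: (ms) => [[out _ _] _ _ _]; case: (ds) => [[out' _ _] _ _ _]; move: nk; rewrite out ?out'.
Qed.

Lemma SOSM_exists : exists m, sub_SOSM P q pr Is Ss A m.
Proof.
case: DA_opt => d [ds dopt]; exists d; split => // m ms [_ [i _ Pi]].
by move: (Rw_notP HP (dopt m ms i)); rewrite Pi.
Qed.
End DA.

Require Import Defs.
From mathcomp Require Import all_boot.
Set Implicit Arguments.
Unset Strict Implicit.
Unset Printing Implicit Defensive.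

Section Gen.
Variables (I S : finType) (P : I -> rel (option S)) (q : S -> nat).
Hypothesis HP : forall i, total_order (P i).
Variables (pr : S -> rel I) (Is : {set I}) (Ss : {set S}) (A : I -> S -> bool).

Lemma card_sum (b : pred I) : #|[set i in Is | b i]| = \sum_(i in Is) b i.
Proof.
rewrite -sum1_card (eq_bigl (fun i => (i \in Is) && b i)); last by move=> i; rewrite inE.
by rewrite big_mkcondr /=; apply: eq_bigr => i _; case: (b i).
Qed.

Lemma sum_load (m : {ffun I -> option S}) :
  (forall i s, i \in Is -> m i = Some s -> s \in Ss) ->
  \sum_(s in Ss) load Is m s = #|[set i in Is | m i != None]|.
Proof.
move=> hm; rewrite /load (eq_bigr (fun s => \sum_(i in Is) (m i == Some s))); last first.
  by move=> s _; rewrite card_sum.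
rewrite exchange_big card_sum; apply: eq_bigr => i iI.
case e: (m i) => [s|] /=.
  rewrite (bigD1 s) ?(hm i s iI e) //= eqxx big1 // => t /andP[_ nts].
  by rewrite eq_sym; case: eqP => // -[]; move/eqP: nts.
by rewrite big1.
Qed.

Lemma st_out m i : sub_stable P q pr Is Ss A m -> i \notin Is -> m i = None.
Proof. by case=> [[h _ _] _ _ _]; apply: h. Qed.
Lemma st_Ss m i s : sub_stable P q pr Is Ss A m -> m i = Some s -> s \in Ss.
Proof. by case=> [[_ h _] _ _ _]; apply: h. Qed.
Lemma st_Is m i s : sub_stable P q pr Is Ss A m -> m i = Some s -> i \in Is.
Proof. by move=> ms e; apply/negPn/negP => ni; move: (st_out ms ni); rewrite e. Qed.
Lemma st_cap m s : sub_stable P q pr Is Ss A m -> s \in Ss -> load Is m s <= q s.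
Proof. by case=> [[_ _ h] _ _ _]; apply: h. Qed.
Lemma st_A m i s : sub_stable P q pr Is Ss A m -> m i = Some s -> A i s.
Proof. by move=> ms e; case: (ms) => [_ h _ _]; case: (h i s (st_Is ms e) e). Qed.
Lemma st_PN m i s : sub_stable P q pr Is Ss A m -> m i = Some s -> P i (Some s) None.
Proof. by move=> ms e; case: (ms) => [_ h _ _]; case: (h i s (st_Is ms e) e). Qed.
Lemma st_nw m i s : sub_stable P q pr Is Ss A m -> i \in Is -> s \in Ss -> A i s ->
  P i (Some s) (m i) -> load Is m s = q s.
Proof. by case=> [_ _ h _]; apply: h. Qed.
Lemma st_fair m i j s : sub_stable P q pr Is Ss A m -> i \in Is -> s \in Ss -> A i s ->
  m j = Some s -> P i (Some s) (m i) -> pr s i j -> False.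
Proof.
move=> ms iI sS Ais mj Pi rij; case: (ms) => [_ _ _ h].
apply: (h i j s iI (st_Is ms mj) sS Ais mj _ (P_Rw Pi) rij).
by apply/eqP => e; move: Pi; rewrite e (negbTE (P_irr HP _ _)).
Qed.
Lemma st_Rw_None m i : sub_stable P q pr Is Ss A m -> Rw P i (m i) None.
Proof.
move=> ms; case e: (m i) => [s|]; [apply: P_Rw; exact: st_PN ms e|exact: Rw_refl].
Qed.

Lemma load_eq m m' : sub_stable P q pr Is Ss A m -> sub_stable P q pr Is Ss A m' ->
  (forall i, i \in Is -> Rw P i (m' i) (m i)) ->
  forall s, s \in Ss -> load Is m' s = load Is m s.
Proof.
move=> ms m's R s0 s0S.
have le : forall s, s \in Ss -> load Is m' s <= load Is m s.
  move=> s sS; rewrite leqNgt; apply/negP => lt.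
  have [k kI /andP[mk nk]] : exists2 k, k \in Is & (m' k == Some s) && (m k != Some s).
    apply/exists_inP; apply/contraT => /exists_inPn h.
    have: load Is m' s <= load Is m s.
      apply: subset_leq_card; apply/subsetP => k; rewrite !inE => /andP[kI mk].
      by rewrite kI /=; move: (h k kI); rewrite mk /= negbK.
    by rewrite leqNgt lt.
  move/eqP: mk => mk.
  have Pk : P k (Some s) (m k) by apply: Rw_P; [rewrite -mk; apply: R|rewrite eq_sym].
  have := st_nw ms kI sS (st_A m's mk) Pk.
  by move=> e; move: (st_cap m's sS); rewrite leqNgt -e lt.
apply: sum_eq_of_le le _ _ s0S.
rewrite !sum_load; last 2 first.
  by move=> i s _ e; first [exact: st_Ss ms e|exact: st_Ss m's e].
  by move=> i s _ e; first [exact: st_Ss ms e|exact: st_Ss m's e].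
apply: subset_leq_card; apply/subsetP => i; rewrite !inE => /andP[iI mi]; rewrite iI /=.
apply: contra mi => /eqP e.
have := R i iI; rewrite e => h; apply/eqP.
case e': (m i) => [t|] //.
by move: (Rw_notP HP h); rewrite e' (st_PN ms e').
Qed.
End Gen.

Definition restr (I S : finType) (Ir : {set I}) (m : {ffun I -> option S}) : {ffun I -> option S} :=
  [ffun i => if i \in Ir then m i else None].
Definition fixedload (I S : finType) (Ir : {set I}) (nu : {ffun I -> option S}) s :=
  #|[set k | (k \notin Ir) && (nu k == Some s)]|.

Section Run.
Variables (I S : finType) (P : I -> rel (option S)) (q : S -> nat).
Hypothesis HP : forall i, total_order (P i).
Variables (pri pr : S -> rel I).
Hypothesis Hpri : forall s, partial_order (pri s).
Hypothesis Hpr : forall s, total_order (pr s).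
Hypothesis Hsub : forall s i j, pri s i j -> pr s i j.

Lemma pri_trans s i j k : pri s i j -> pri s j k -> pri s i k.
Proof. by case: (Hpri s) => _ t; apply: t. Qed.
Lemma pri_asym s i j : pri s i j -> ~~ pri s j i.
Proof. by case: (Hpri s) => a _; apply: a. Qed.

Record Inv (Ir : {set I}) (Sr : {set S}) (A : I -> S -> bool) (mu nu : {ffun I -> option S}) : Prop := {
 J1 : forall i s, i \notin Ir -> nu i = Some s -> s \notin Sr /\ P i (Some s) None;
 J2 : forall s, s \notin Sr -> fixedload Ir nu s <= q s;
 J3a : forall i s, i \notin Ir -> P i (Some s) (nu i) -> s \in Sr -> load Ir mu s = q s;
 J3b : forall i s, i \notin Ir -> P i (Some s) (nu i) -> s \notin Sr -> fixedload Ir nu s = q s;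
 J4 : forall i s, i \in Ir -> s \notin Sr -> P i (Some s) (mu i) -> fixedload Ir nu s = q s;
 J5a : forall j s i, j \notin Ir -> nu j = Some s -> i \notin Ir -> P i (Some s) (nu i) -> ~~ pri s i j;
 J5b : forall j s i, j \notin Ir -> nu j = Some s -> i \in Ir -> P i (Some s) (mu i) -> ~~ pri s i j;
 J6 : forall j s, j \in Ir -> s \in Sr -> ~~ A j s ->
        exists2 i0, i0 \notin Ir & pri s i0 j && P i0 (Some s) (nu i0);
 J7 : forall i j s, i \notin Ir -> j \in Ir -> s \in Sr -> P i (Some s) (nu i) -> pri s i j -> ~~ A j s
}.


Section Step.
Variables (Ir : {set I}) (Sr : {set S}) (A : I -> S -> bool) (mu nu : {ffun I -> option S}).
Hypothesis Hmu : sub_SOSM P q pr Ir Sr A mu.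
Local Notation und := (underdemanded P Ir Sr A mu).
Local Notation rem := (removed P Ir Sr A mu).
Local Notation Ir' := (Ir :\: rem).
Local Notation Sr' := (Sr :\: und).
Local Notation A' := (new_allowed P pri Ir Sr A mu).
Local Notation nu' := (fix_assign P Ir Sr A mu nu).

Lemma mus : sub_stable P q pr Ir Sr A mu. Proof. by case: Hmu. Qed.

Lemma und_Sr s : s \in und -> s \in Sr.
Proof. by rewrite inE => /andP[]. Qed.
Lemma undP s i : s \in und -> i \in Ir -> A i s -> P i (Some s) (mu i) -> False.
Proof.
rewrite inE => /andP[_ /forall_inP h] iI Ais Pis.
by move: (h i iI); rewrite Ais Pis.
Qed.
Lemma und_intro s : s \in Sr -> (forall i, i \in Ir -> A i s -> P i (Some s) (mu i) -> False) -> s \in und.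
Proof.
move=> sS h; rewrite inE sS /=; apply/forall_inP => i iI.
by apply/negP => /andP[a b]; apply: h iI a b.
Qed.
Lemma rem_Ir i : i \in rem -> i \in Ir.
Proof. by rewrite inE => /andP[]. Qed.
Lemma rem_some i s : i \in rem -> mu i = Some s -> s \in und.
Proof.
rewrite inE => /andP[_ /orP[/eqP->//|/exists_inP [t tu /eqP]]] -> [<-] //.
Qed.
Lemma rem_none i : i \in Ir -> mu i = None -> i \in rem.
Proof. by move=> iI e; rewrite inE iI e eqxx. Qed.
Lemma rem_und i s : i \in Ir -> mu i = Some s -> s \in und -> i \in rem.
Proof.
move=> iI e su; rewrite inE iI /=; apply/orP; right; apply/exists_inP; exists s => //.
by rewrite e.
Qed.
Lemma Ir'P i : (i \in Ir') = (i \in Ir) && (i \notin rem).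
Proof. by rewrite inE andbC. Qed.
Lemma keep i : i \in Ir' -> exists2 s, mu i = Some s & s \in Sr'.
Proof.
rewrite Ir'P => /andP[iI nr].
case e: (mu i) => [s|]; last by move: nr; rewrite rem_none.
exists s => //; rewrite inE (st_Ss mus e) andbT.
by apply: contra nr; apply: rem_und.
Qed.
Lemma nu'E i : nu' i = if i \in rem then mu i else nu i.
Proof. by rewrite ffunE. Qed.
Lemma A'_le j s : A' j s -> A j s.
Proof. by case/andP. Qed.
Lemma A'P j s : ~~ A' j s -> ~~ A j s \/
   exists2 i, i \in rem & [&& A i s, P i (Some s) (mu i) & pri s i j].
Proof.
rewrite /new_allowed negb_and => /orP[->|/forall_inPn [i ir h]]; first by left.
by right; exists i => //; rewrite negbK in h.
Qed.

Lemma H_nw i s : i \in Ir -> s \in Sr -> A i s -> P i (Some s) (mu i) -> load Ir mu s = q s.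
Proof. exact: st_nw mus. Qed.

Lemma restr_stable : sub_stable P q pr Ir' Sr' A' (restr Ir' mu).
Proof.
have rE i : restr Ir' mu i = if i \in Ir' then mu i else None by rewrite ffunE.
have loadE s : s \in Sr' -> load Ir' (restr Ir' mu) s = load Ir mu s.
  move=> sS'; apply: eq_card => i; rewrite [in LHS]inE [in RHS]inE rE Ir'P.
  case: (boolP (i \in rem)) => ir /=; last by rewrite andbT; case: (i \in Ir).
  rewrite andbF (rem_Ir ir) /=; apply/esym/negP => /eqP e.
  by move: sS'; rewrite inE (rem_some ir e).
split; first split.
- by move=> i; rewrite rE => /negbTE ->.
- by move=> i s; rewrite rE; case: ifP => // /keep [t -> tS] [<-].
- move=> s sS'; rewrite loadE //; apply: st_cap mus _.
  by move: sS'; rewrite inE => /andP[].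
- move=> i s; rewrite rE => iI'; rewrite iI' => e; split; last exact: st_PN mus e.
  rewrite /new_allowed (st_A mus e) /=; apply/forall_inP => k kr.
  apply/negP => /and3P[Aks Pks rki].
  by apply: (st_fair HP mus (rem_Ir kr) (st_Ss mus e) Aks e Pks (Hsub rki)).
- move=> i s iI' sS' Ais; rewrite rE iI' => Pis; rewrite loadE //.
  move: iI'; rewrite Ir'P => /andP[iI _].
  move: sS'; rewrite inE => /andP[_ sS].
  exact: H_nw iI sS (A'_le Ais) Pis.
- move=> i j s iI' jI' sS' Ais; rewrite !rE iI' jI' => mj ni Rwi rij.
  move: iI'; rewrite Ir'P => /andP[iI _].
  move: sS'; rewrite inE => /andP[_ sS].
  apply: (st_fair HP mus iI sS (A'_le Ais) mj (Rw_P Rwi _) rij).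
  by rewrite eq_sym.
Qed.

Lemma load_restr s : s \in Sr' -> load Ir' (restr Ir' mu) s = load Ir mu s.
Proof.
move=> sS'; apply: eq_card => i; rewrite [in LHS]inE [in RHS]inE ffunE Ir'P.
case: (boolP (i \in rem)) => ir /=; last by rewrite andbT; case: (i \in Ir).
rewrite andbF (rem_Ir ir) /=; apply/esym/negP => /eqP e.
by move: sS'; rewrite inE (rem_some ir e).
Qed.

Section Next.
Variable mu' : {ffun I -> option S}.
Hypothesis Hmu' : sub_SOSM P q pr Ir' Sr' A' mu'.

Lemma mu'R i : i \in Ir' -> Rw P i (mu' i) (mu i).
Proof.
move=> iI'; have := SOSM_opt HP Hpr Hmu' restr_stable i.
by rewrite ffunE iI'.
Qed.

Lemma load' s : s \in Sr' -> load Ir' mu' s = load Ir mu s.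
Proof.
move=> sS'; rewrite -load_restr //; apply: (load_eq HP restr_stable) => //.
  by case: Hmu'.
by move=> i iI'; rewrite ffunE iI'; apply: mu'R.
Qed.
End Next.

Hypothesis Hinv : Inv Ir Sr A mu nu.


Lemma H_full i s : i \in Ir -> s \in Sr -> P i (Some s) (mu i) -> load Ir mu s = q s.
Proof.
move=> iI sS Pis; case: (boolP (A i s)) => Ais; first exact: H_nw iI sS Ais Pis.
case: (J6 Hinv iI sS Ais) => i0 ni0 /andP[_ P0].
exact: (J3a Hinv ni0 P0 sS).
Qed.

Lemma notIr'P i : (i \notin Ir') = (i \notin Ir) || (i \in rem).
Proof.
rewrite Ir'P negb_and negbK; case: (boolP (i \in rem)) => ir; last by rewrite !orbF.
by rewrite !orbT.
Qed.

Lemma fl_und s : s \in und -> fixedload Ir' nu' s = load Ir mu s.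
Proof.
move=> su; apply: eq_card => k; rewrite [in LHS]inE [in RHS]inE notIr'P nu'E.
case: (boolP (k \in rem)) => kr /=.
  rewrite orbT (rem_Ir kr) //.
case: (boolP (k \in Ir)) => kI /=.
  apply/esym/negP => /eqP e; move: kr; by rewrite (rem_und kI e su).
apply/negP => /eqP e; case: (J1 Hinv kI e) => ns _.
by move: ns; rewrite (und_Sr su).
Qed.

Lemma fl_old s : s \notin Sr -> fixedload Ir' nu' s = fixedload Ir nu s.
Proof.
move=> ns; apply: eq_card => k; rewrite [in LHS]inE [in RHS]inE notIr'P nu'E.
case: (boolP (k \in rem)) => kr /=; last by rewrite orbF.
rewrite orbT; move: (rem_Ir kr) => kI; rewrite kI /=.
by apply/negP => /eqP e; move: ns; rewrite (st_Ss mus e).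
Qed.

Lemma nu'_old i : i \notin Ir -> nu' i = nu i.
Proof.
move=> ni; rewrite nu'E; case: ifP => // ir.
by move: ni; rewrite (rem_Ir ir).
Qed.

Section Next2.
Variable mu' : {ffun I -> option S}.
Hypothesis Hmu' : sub_SOSM P q pr Ir' Sr' A' mu'.

Lemma notSr'P s : (s \notin Sr') = (s \in und) || (s \notin Sr).
Proof. by rewrite inE negb_and negbK. Qed.

Lemma H_full' i s : i \notin Ir' -> P i (Some s) (nu' i) -> s \in Sr -> load Ir mu s = q s.
Proof.
rewrite notIr'P => /orP[ni|ir].
  by rewrite nu'_old // => Pi sS; apply: (J3a Hinv ni Pi sS).
rewrite nu'E ir => Pi sS; exact: (H_full (rem_Ir ir) sS Pi).
Qed.

Lemma J5_gen j s i : j \notin Ir' -> nu' j = Some s ->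
  (i \notin Ir) && P i (Some s) (nu i) || (i \in Ir) && P i (Some s) (mu i) -> ~~ pri s i j.
Proof.
rewrite notIr'P => /orP[nj|jr].
  rewrite nu'_old // => e /orP[/andP[ni Pi]|/andP[iI Pi]].
    exact: (J5a Hinv nj e ni Pi).
  exact: (J5b Hinv nj e iI Pi).
rewrite nu'E jr => e.
have jI := rem_Ir jr; have su := rem_some jr e; have sS := und_Sr su.
have Ajs := st_A mus e.
case/orP=> [/andP[ni Pi]|/andP[iI Pi]]; apply/negP => pij.
  by move: (J7 Hinv ni jI sS Pi pij); rewrite Ajs.
have nAi : ~~ A i s by apply/negP => Ai; apply: (undP su iI Ai Pi).
case: (J6 Hinv iI sS nAi) => i0 ni0 /andP[p0 P0].
by move: (J7 Hinv ni0 jI sS P0 (pri_trans p0 pij)); rewrite Ajs.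
Qed.

Lemma Inv_step : Inv Ir' Sr' A' mu' nu'.
Proof.
have mu'P i s : i \in Ir' -> P i (Some s) (mu' i) -> P i (Some s) (mu i).
  by move=> iI' h; apply: (P_Rw_trans HP h); apply: mu'R.
have Ir'Ir i : i \in Ir' -> i \in Ir by rewrite Ir'P => /andP[].
have Sr'Sr s : s \in Sr' -> s \in Sr by rewrite inE => /andP[].
split.
- move=> i s; rewrite notIr'P => /orP[ni|ir].
    rewrite nu'_old // => e; case: (J1 Hinv ni e) => ns Ps; split => //.
    by apply: contra ns; apply: Sr'Sr.
  rewrite nu'E ir => e; split; last exact: st_PN mus e.
  by rewrite notSr'P (rem_some ir e).
- move=> s; rewrite notSr'P => /orP[su|ns].
    by rewrite fl_und //; apply: st_cap mus (und_Sr su).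
  by rewrite fl_old //; apply: (J2 Hinv ns).
- move=> i s ni Pi sS'; rewrite load' //.
  exact: H_full' ni Pi (Sr'Sr _ sS').
- move=> i s ni Pi; rewrite notSr'P => /orP[su|ns].
    by rewrite fl_und //; apply: H_full' ni Pi (und_Sr su).
  rewrite fl_old //; move: ni Pi; rewrite notIr'P => /orP[ni|ir].
    by rewrite nu'_old // => Pi; apply: (J3b Hinv ni Pi ns).
  by rewrite nu'E ir => Pi; apply: (J4 Hinv (rem_Ir ir) ns Pi).
- move=> i s iI' ; rewrite notSr'P => /orP[su|ns] Pi; have Pm := mu'P _ _ iI' Pi.
    by rewrite fl_und //; apply: H_full (Ir'Ir _ iI') (und_Sr su) Pm.
  by rewrite fl_old //; apply: (J4 Hinv (Ir'Ir _ iI') ns Pm).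
- move=> j s i nj e ni Pi; apply: J5_gen nj e _.
  move: ni Pi; rewrite notIr'P => /orP[ni|ir].
    by rewrite nu'_old // => Pi; rewrite ni Pi.
  by rewrite nu'E ir (rem_Ir ir) => Pi; rewrite Pi orbT.
- move=> j s i nj e iI' Pi; apply: J5_gen nj e _.
  by rewrite (Ir'Ir _ iI') (mu'P _ _ iI' Pi) orbT.
- move=> j s jI' sS' nA; case: (A'P nA) => [nA0|[i ir /and3P[_ Pi pij]]].
    case: (J6 Hinv (Ir'Ir _ jI') (Sr'Sr _ sS') nA0) => i0 ni0 /andP[p0 P0].
    exists i0; first by rewrite notIr'P ni0.
    by rewrite nu'_old // p0 P0.
  exists i; first by rewrite notIr'P ir orbT.
  by rewrite nu'E ir pij Pi.
- move=> i j s; rewrite notIr'P => /orP[ni|ir] jI' sS' Pi pij.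
    rewrite nu'_old // in Pi.
    by apply: contra (J7 Hinv ni (Ir'Ir _ jI') (Sr'Sr _ sS') Pi pij); apply: A'_le.
  rewrite nu'E ir in Pi.
  case: (boolP (A i s)) => Ais.
    rewrite /new_allowed negb_and; apply/orP; right; apply/forall_inPn.
    by exists i => //; rewrite Ais Pi pij.
  case: (J6 Hinv (rem_Ir ir) (Sr'Sr _ sS') Ais) => i0 ni0 /andP[p0 P0].
  apply: contra (J7 Hinv ni0 (Ir'Ir _ jI') (Sr'Sr _ sS') P0 (pri_trans p0 pij)).
  exact: A'_le.
Qed.
End Next2.
End Step.
Lemma over_cap (Ir : {set I}) (nu lam : {ffun I -> option S}) i s :
  stable P q pri lam -> i \in Ir -> lam i = Some s ->
  (forall k, k \notin Ir -> lam k = nu k) -> fixedload Ir nu s = q s -> False.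
Proof.
move=> ls iI li off fl.
have := st_cap ls (in_setT s); rewrite leqNgt; move/negP; apply.
rewrite -fl /load [X in _ < X](cardsD1 i).
have -> : i \in [set k in [set: I] | lam k == Some s] by rewrite !inE li eqxx.
rewrite add1n ltnS.
apply: subset_leq_card; apply/subsetP => k; rewrite !inE => /andP[nk /eqP nks].
rewrite (off k nk) nks eqxx; apply/andP; split => //.
by apply/eqP => e; move: nk; rewrite e iI.
Qed.

Lemma ea_props Ir Sr A mu nu res :
  ea_from P q pri pr Ir Sr A mu nu res ->
  sub_SOSM P q pr Ir Sr A mu -> Inv Ir Sr A mu nu ->
  [/\ stable P q pri res,
      (forall i, i \in Ir -> Rw P i (res i) (mu i)),
      (forall i, i \notin Ir -> res i = nu i) &
      (forall lam, stable P q pri lam -> (forall i, Rw P i (lam i) (res i)) ->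
         (forall i, i \notin Ir -> lam i = nu i) -> lam = res)].
Proof.
move=> H; elim: H => {Ir Sr A mu nu res}.
  move=> Ir Sr A mu nu Sr0 Hmu Hinv.
  have ms := mus Hmu.
  have muN i : mu i = None.
    by case e: (mu i) => [s|] //; move: (st_Ss ms e); rewrite Sr0 inE.
  set res := [ffun i => _].
  have resE i : res i = if i \in Ir then None else nu i by rewrite ffunE muN.
  have loadE s : load setT res s = fixedload Ir nu s.
    apply: eq_card => k; rewrite !inE resE; by case: (k \in Ir).
  have nS s : s \notin Sr by rewrite Sr0 inE.
  split.
  - split; first split.
    + by move=> i; rewrite in_setT.
    + by move=> i s _; rewrite in_setT.
    + by move=> s _; rewrite loadE; apply: (J2 Hinv (nS s)).
    + move=> i s _; rewrite resE; case: ifP => // iI e; split => //.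
      by case: (J1 Hinv (negbT iI) e).
    + move=> i s _ _ _; rewrite resE loadE; case: ifP => iI Pi.
        by apply: (J4 Hinv iI (nS s)); rewrite muN.
      exact: (J3b Hinv (negbT iI) Pi (nS s)).
    + move=> i j s _ _ _ _; rewrite !resE; case: ifP => // jI e ne Rwi pij.
      have : P i (Some s) (if i \in Ir then None else nu i).
        by apply: Rw_P Rwi _; rewrite eq_sym.
      case: ifP => iI Pi'.
        by move: (J5b Hinv (negbT jI) e iI); rewrite muN Pi' pij => /(_ isT).
      by move: (J5a Hinv (negbT jI) e (negbT iI) Pi'); rewrite pij.
  - by move=> i iI; rewrite resE iI muN; apply: Rw_refl.
  - by move=> i ni; rewrite resE (negbTE ni).
  - move=> lam ls lR off; apply/ffunP => i; case: (boolP (i \in Ir)) => iI; last first.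
      by rewrite off // resE (negbTE iI).
    rewrite resE iI; case e: (lam i) => [s|] //; exfalso.
    have Pi : P i (Some s) (mu i).
      by rewrite muN; move: (lR i); rewrite e resE iI => h; apply: Rw_P h _.
    exact: over_cap ls iI e off (J4 Hinv iI (nS s) Pi).
move=> Ir Sr A mu nu mu' res nS Hmu' run IH Hmu Hinv.
have ms := mus Hmu.
have [rs rR roff rC] := IH Hmu' (Inv_step Hmu Hinv Hmu').
set rem := removed P Ir Sr A mu in Hmu' run IH rR roff rC *.
have IrP i : i \in Ir -> i \in rem \/ i \in Ir :\: rem.
  by move=> iI; case: (boolP (i \in rem)) => ir; [left|right; rewrite inE ir iI].
have resR i : i \in Ir -> Rw P i (res i) (mu i).
  move=> iI; case: (IrP i iI) => [ir|iI'].
    rewrite roff; last by rewrite inE ir.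
    by rewrite nu'E ir; apply: Rw_refl.
  exact: (Rw_trans HP (rR i iI') (mu'R Hmu Hmu' iI')).
split => //.
- move=> i ni; rewrite roff ?nu'_old //; last by rewrite inE negb_and ni orbT.
- move=> lam ls lR off.
  have lRm i : i \in Ir -> Rw P i (lam i) (mu i) by move=> iI; apply: (Rw_trans HP (lR i) (resR i iI)).
  have la i s : i \in Ir -> lam i = Some s -> s \in Sr.
    move=> iI e; apply/negPn/negP => ns.
    have Pi : P i (Some s) (mu i).
      apply: Rw_P; first by rewrite -e; apply: lRm.
      by apply/eqP => e'; move: ns; rewrite (st_Ss ms (esym e')).
    exact: over_cap ls iI e off (J4 Hinv iI ns Pi).
  have lb i s : i \in Ir -> lam i = Some s -> Some s != mu i -> A i s.
    move=> iI e ne; apply/negPn/negP => nA.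
    case: (J6 Hinv iI (la _ _ iI e) nA) => i0 ni0 /andP[p0 P0].
    rewrite -off // in P0.
    exact: (st_fair HP ls (in_setT i0) (in_setT s) (isT : allA i0 s) e P0 p0).
  have lc s : s \in Sr -> load Ir lam s <= load Ir mu s.
    move=> sS; case: (boolP [exists k in Ir, (lam k == Some s) && (mu k != Some s)]).
      case/exists_inP => k kI /andP[/eqP lk nk].
      have Pk : P k (Some s) (mu k) by apply: Rw_P; [rewrite -lk; apply: lRm|rewrite eq_sym].
      have nk' : Some s != mu k by rewrite eq_sym.
      rewrite (H_nw Hmu kI sS (lb k s kI lk nk') Pk).
      apply: leq_trans (st_cap ls (in_setT s)); apply: subset_leq_card; apply/subsetP => x.
      by rewrite !inE => /andP[_ ->].
    move/exists_inPn => h; apply: subset_leq_card; apply/subsetP => x; rewrite !inE => /andP[xI lx].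
    by rewrite xI /=; move: (h x xI); rewrite lx /= negbK.
  have msub : [set i in Ir | mu i != None] \subset [set i in Ir | lam i != None].
    apply/subsetP => i; rewrite !inE => /andP[iI mi]; rewrite iI /=.
    apply: contra mi => /eqP li; apply/eqP; move: (lRm i iI); rewrite li.
    case e: (mu i) => [t|] // h; by move: (Rw_notP HP h); rewrite (st_PN ms e).
  have sl : \sum_(s in Sr) load Ir lam s = #|[set i in Ir | lam i != None]|.
    by apply: sum_load => i s iI; apply: la.
  have sm : \sum_(s in Sr) load Ir mu s = #|[set i in Ir | mu i != None]|.
    by apply: sum_load => i s _; apply: st_Ss ms.
  have leq_s : \sum_(s in Sr) load Ir mu s <= \sum_(s in Sr) load Ir lam s.
    by rewrite sl sm; apply: subset_leq_card.
  have leqE := sum_eq_of_le lc leq_s.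
  have mEq : [set i in Ir | mu i != None] = [set i in Ir | lam i != None].
    apply/eqP; rewrite eqEcard msub /= -sl -sm.
    by rewrite (eq_bigr (fun s => load Ir mu s)) // => s sS; rewrite leqE.
  have ld i : i \in rem -> lam i = mu i.
    move=> ir; have iI := rem_Ir ir.
    case e: (mu i) => [s|].
      have su := rem_some ir e; have sS := und_Sr su.
      apply/eqP; apply/contraT => ne; exfalso.
      have [k kI /andP[/eqP lk nk]] : exists2 k, k \in Ir & (lam k == Some s) && (mu k != Some s).
        apply/exists_inP; apply/contraT => /exists_inPn h.
        have sub : [set k in Ir | lam k == Some s] \proper [set k in Ir | mu k == Some s].
          apply/properP; split.
            apply/subsetP => x; rewrite !inE => /andP[xI lx]; rewrite xI /=.
            by move: (h x xI); rewrite lx /= negbK.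
          by exists i; rewrite !inE ?iI ?e ?eqxx //=; rewrite e in ne.
        by move: (proper_card sub); rewrite -/(load Ir lam s) -/(load Ir mu s) (leqE s sS) ltnn.
      have nk' : Some s != mu k by rewrite eq_sym.
      have Pk : P k (Some s) (mu k) by apply: Rw_P nk'; rewrite -lk; apply: lRm.
      exact: (undP su kI (lb k s kI lk nk') Pk).
    apply/eqP; apply/contraT => ne.
    have : i \in [set i in Ir | lam i != None] by rewrite inE iI.
    by rewrite -mEq inE e eqxx andbF.
  apply: rC => // i; rewrite notIr'P => /orP[ni|ir].
    by rewrite nu'_old // off.
  by rewrite nu'E ir ld.
Qed.
End Run.

Require Import Defs.
From mathcomp Require Import all_boot.
Set Implicit Arguments.
Unset Strict Implicit.
Unset Printing Implicit Defensive.

Section Fix.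
Variable T : finType.
Variable f : T -> T.
Variable D : {set T}.
Hypothesis fD : forall x, x \in D -> f x \in D.
Hypothesis D0 : D != set0.

Definition En n : {set T} := iter n (fun X : {set T} => f @: X) D.

Lemma En_sub n : En n.+1 \subset En n.
Proof.
elim: n => [|n IH] /=.
  by apply/subsetP => y /imsetP [x xD ->]; apply: fD.
by apply: imsetS.
Qed.

Lemma En_ne n : En n != set0.
Proof.
elim: n => [//|n IH] /=; case/set0Pn: IH => x xE.
by apply/set0Pn; exists (f x); apply: imset_f.
Qed.

Lemma En_grow n : (forall k, k < n -> #|En k.+1| < #|En k|) -> #|En n| + n <= #|D|.
Proof.
elim: n => [|n IH] h; first by rewrite addn0.
have := IH (fun k kn => h k (ltnW kn)); rewrite addnS.
by move=> h2; apply: leq_trans h2; rewrite ltn_add2r; apply: h.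
Qed.

Lemma fix_cycle : exists E : {set T},
  [/\ E \subset D, E != set0, f @: E = E & {in E &, injective f}].
Proof.
have [k hk] : exists k : 'I_#|T|.+1, #|En k| <= #|En k.+1|.
  apply/existsP; apply/contraT => /existsPn h.
  have hh : forall k, k < #|T|.+1 -> #|En k.+1| < #|En k|.
    by move=> k kn; move: (h (Ordinal kn)); rewrite -ltnNge.
  have := En_grow hh; move=> /(leq_trans)/(_ (subset_leq_card (subsetT D))).
  by rewrite cardsT addnS ltnNge leq_addl.
have EE : En k.+1 = En k by apply/eqP; rewrite eqEcard En_sub hk.
exists (En k); split.
- elim: (nat_of_ord k) => [|n IH]; first exact: subxx.
  exact: subset_trans (En_sub n) IH.
- exact: En_ne.
- exact: EE.
- by apply/imset_injP; have -> : f @: En k = En k by exact: EE.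
Qed.
End Fix.

Section Prog.
Variables (I S : finType) (P : I -> rel (option S)) (q : S -> nat).
Hypothesis HP : forall i, total_order (P i).
Variable pr : S -> rel I.
Hypothesis Hpr : forall s, total_order (pr s).
Variables (Ir : {set I}) (Sr : {set S}) (A : I -> S -> bool) (mu : {ffun I -> option S}).
Hypothesis Hmu : sub_SOSM P q pr Ir Sr A mu.

Lemma progress : Sr != set0 ->
  (removed P Ir Sr A mu != set0) || (underdemanded P Ir Sr A mu != set0).
Proof.
move=> Sr0; apply/contraT; rewrite negb_or !negbK => /andP[/eqP r0 /eqP u0].
have ms : sub_stable P q pr Ir Sr A mu by case: Hmu.
have allm i : i \in Ir -> exists2 t, mu i = Some t & t \in Sr.
  move=> iI; case e: (mu i) => [t|]; first by exists t => //; exact: st_Ss ms e.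
  by move: (rem_none P Sr A iI e); rewrite r0 inE.
pose env s i := [&& i \in Ir, A i s & P i (Some s) (mu i)].
pose top s i := env s i && [forall k, env s k ==> (k == i) || pr s i k].
have tops s : s \in Sr -> exists i, top s i.
  move=> sS.
  have [i0 ei0] : exists i, env s i.
    apply/existsP; apply/contraT => /existsPn h.
    have : s \in underdemanded P Ir Sr A mu.
      apply: (und_intro sS) => i iI Ai Pi; by move: (h i); rewrite /env iI Ai Pi.
    by rewrite u0 inE.
  have po : partial_order (pr s) by case: (Hpr s).
  case: (exists_top po (to_tot (Hpr s)) (X := env s) ei0) => i ei hi.
  exists i; rewrite /top ei /=; apply/forallP => k; apply/implyP => ek.
  by case: (eqVneq k i) => [->|nki] //=; rewrite hi.
pose e s := [pick i | top s i].
have eP s : s \in Sr -> exists2 i, e s = Some i & top s i.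
  move=> sS; rewrite /e; case: pickP => [i ti|h]; first by exists i.
  by case: (tops s sS) => i ti; move: (h i); rewrite ti.
pose f s := if e s is Some i then odflt s (mu i) else s.
have fD s : s \in Sr -> f s \in Sr.
  move=> sS; case: (eP s sS) => i ei /andP[/and3P[iI _ _] _].
  by rewrite /f ei; case: (allm i iI) => t -> tS.
case: (fix_cycle fD Sr0) => E [ES E0 fE finj].
have EsS s : s \in E -> s \in Sr by move/(subsetP ES).
have f_mu s k : s \in Sr -> e s = Some k -> mu k = Some (f s).
  move=> sS ek; case: (eP s sS) => k' ek' /andP[/and3P[kI _ _] _].
  rewrite ek in ek'; case: ek' => <- in kI *.
  by rewrite /f ek; case: (allm k kI) => t ->.
have e_inj s1 s2 : s1 \in E -> s2 \in E -> e s1 = e s2 -> s1 = s2.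
  move=> h1 h2 ee; apply: finj => //.
  case: (eP s1 (EsS s1 h1)) => k ek _.
  have := f_mu s1 k (EsS s1 h1) ek; rewrite ee in ek; rewrite (f_mu s2 k (EsS s2 h2) ek).
  by case.
pose pk k := [pick s | (s \in E) && (e s == Some k)].
pose m' := [ffun k => if pk k is Some s then Some s else mu k].
have pkS k s : pk k = Some s -> s \in E /\ e s = Some k.
  by rewrite /pk; case: pickP => // x /andP[xE /eqP ex] [<-].
have pkN k s : pk k = None -> s \in E -> e s != Some k.
  by rewrite /pk; case: pickP => [x _ //|h _ sE]; move: (h s); rewrite /= sE /= => ->.
have pk_top k s : pk k = Some s -> top s k.
  move=> h; case: (pkS k s h) => sE es.
  by case: (eP s (EsS s sE)) => i ei ti; rewrite es in ei; case: ei ti => ->.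
have pk_Ir k s : pk k = Some s -> k \in Ir.
  by move/pk_top => /andP[/and3P[]].
have m'E k : m' k = if pk k is Some s then Some s else mu k by rewrite ffunE.
have m'R k : Rw P k (m' k) (mu k).
  rewrite m'E; case h: (pk k) => [s|]; last exact: Rw_refl.
  by apply: P_Rw; move: (pk_top k s h) => /andP[/and3P[_ _ ->]].
have pk_some s : s \in E -> exists2 k, e s = Some k & pk k = Some s.
  move=> sE; case: (eP s (EsS s sE)) => k ek _; exists k => //.
  case h: (pk k) => [s'|]; last by move: (pkN k s h sE); rewrite ek eqxx.
  by case: (pkS k s' h) => s'E es'; congr Some; apply: e_inj => //; rewrite es' ek.
have fEin s : s \in E -> f s \in E by move=> sE; rewrite -fE; apply: imset_f.
have loadm t : load Ir m' t = load Ir mu t.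
  case: (boolP (t \in E)) => tE; last first.
    apply: eq_card => k; rewrite [in LHS]inE [in RHS]inE m'E.
    case h: (pk k) => [s|] //; case: (pkS k s h) => sE es.
    have kI := pk_Ir k s h.
    rewrite (f_mu s k (EsS s sE) es).
    have -> : (Some s == Some t) = false by apply/negbTE; apply: contra tE => /eqP [<-].
    have -> : (Some (f s) == Some t) = false.
      by apply/negbTE; apply: contra tE => /eqP [<-]; apply: fEin.
    by rewrite ?andbF.
  case: (pk_some t tE) => b eb pb.
  have : t \in f @: E by rewrite fE.
  case/imsetP => st stE tst.
  case: (pk_some st stE) => a ea pa.
  have bX : b \in [set k in Ir | m' k == Some t] by rewrite inE m'E pb (pk_Ir b _ pb) /= eqxx.
  have aY : a \in [set k in Ir | mu k == Some t].
    by rewrite inE (f_mu st a (EsS st stE) ea) (pk_Ir a _ pa) tst eqxx.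
  rewrite /load (cardsD1 b) bX (cardsD1 a [set k in Ir | mu k == Some t]) aY; congr (_ + _).
  apply: eq_card => k; rewrite !in_setD1 [in LHS]inE [in RHS]inE m'E.
  case h: (pk k) => [s|].
    case: (pkS k s h) => sE es.
    apply/idP/idP => /and3P[nk kI /eqP e']; exfalso.
      case: e' => st'; move: es; rewrite st' eb => -[ekb].
      by move: nk; rewrite ekb eqxx.
    move: e'; rewrite (f_mu s k (EsS s sE) es) tst => -[fs].
    have ss := finj _ _ sE stE fs; move: es; rewrite ss ea => -[eka].
    by move: nk; rewrite eka eqxx.
  have -> : (k != b) = true by apply/negP => /eqP kb; move: h; rewrite kb pb.
  have -> : (k != a) = true by apply/negP => /eqP kb; move: h; rewrite kb pa.
  by [].
have m'st : sub_stable P q pr Ir Sr A m'.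
  split; first split.
  - move=> i ni; rewrite m'E; case h: (pk i) => [s|]; first by move: ni; rewrite (pk_Ir i s h).
    exact: st_out ms ni.
  - move=> i s; rewrite m'E; case h: (pk i) => [s'|]; last exact: st_Ss ms.
    by case=> <-; case: (pkS i s' h) => s'E _; apply: EsS.
  - by move=> s sS; rewrite loadm; apply: st_cap ms sS.
  - move=> i s iI; rewrite m'E; case h: (pk i) => [s'|]; last first.
      by move=> e0; split; [exact: (st_A ms e0)|exact: (st_PN ms e0)].
    case=> <-; move: (pk_top i s' h) => /andP[/and3P[_ Ai Pi] _]; split => //.
    case: (allm i iI) => t e0 _; rewrite e0 in Pi.
    exact: (P_trans HP Pi (st_PN ms e0)).
  - move=> i s iI sS Ais Pi; rewrite loadm; apply: st_nw ms iI sS Ais _.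
    exact: (P_Rw_trans HP Pi (m'R i)).
  - move=> i j s iI jI sS Ais mj mi Rwi pij.
    have Pi : P i (Some s) (m' i) by apply: Rw_P Rwi _; rewrite eq_sym.
    have Pm := P_Rw_trans HP Pi (m'R i).
    move: mj; rewrite m'E; case h: (pk j) => [s'|] mj; last exact: (st_fair HP ms iI sS Ais mj Pm pij).
    case: mj => ss'; rewrite ss' in h.
    move: (pk_top j s h) => /andP[_ /forallP /(_ i)].
    rewrite /env iI Ais Pm /= => /orP[/eqP eij|pji].
      by move: mi; rewrite eij m'E h eqxx.
    by move: (to_asym (Hpr s) pji); rewrite pij.
case: Hmu => _ nd; exfalso; apply: (nd m' m'st); split; first by move=> i _; apply: m'R.
case/set0Pn: E0 => s0 s0E; case: (pk_some s0 s0E) => k ek pk0.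
exists k; first exact: pk_Ir k s0 pk0.
by rewrite m'E pk0; move: (pk_top k s0 pk0) => /andP[/and3P[_ _ ->]].
Qed.
End Prog.

Section RunEx.
Variables (I S : finType) (P : I -> rel (option S)) (q : S -> nat).
Hypothesis HP : forall i, total_order (P i).
Variables (pri pr : S -> rel I).
Hypothesis Hpr : forall s, total_order (pr s).

Lemma run_exists n (Ir : {set I}) (Sr : {set S}) A (mu nu : {ffun I -> option S}) : #|Ir| + #|Sr| <= n ->
  sub_SOSM P q pr Ir Sr A mu -> exists res, ea_from P q pri pr Ir Sr A mu nu res.
Proof.
elim: n Ir Sr A mu nu => [|n IH] Ir Sr A mu nu hn Hmu.
  exists [ffun i => if i \in Ir then mu i else nu i]; apply: ea_stop.
  by apply/eqP; rewrite -cards_eq0; move: hn; rewrite leqn0 addn_eq0 => /andP[_].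
case: (eqVneq Sr set0) => [S0|nS].
  by exists [ffun i => if i \in Ir then mu i else nu i]; apply: ea_stop.
set rem := removed P Ir Sr A mu; set und := underdemanded P Ir Sr A mu.
case: (SOSM_exists q HP (Ir :\: rem) (Sr :\: und) (new_allowed P pri Ir Sr A mu) Hpr) => mu' Hmu'.
have lt : #|Ir :\: rem| + #|Sr :\: und| < #|Ir| + #|Sr|.
  have l1 : #|Ir :\: rem| <= #|Ir| by apply: subset_leq_card; apply: subsetDl.
  have l2 : #|Sr :\: und| <= #|Sr| by apply: subset_leq_card; apply: subsetDl.
  case/orP: (progress HP Hpr Hmu nS) => /set0Pn [x xin].
    have : #|Ir :\: rem| < #|Ir|.
      apply: proper_card; apply/properP; split; first exact: subsetDl.
      by exists x; [apply: rem_Ir xin|rewrite inE xin].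
    by move=> h; rewrite -addSn; apply: leq_add.
  have : #|Sr :\: und| < #|Sr|.
    apply: proper_card; apply/properP; split; first exact: subsetDl.
    by exists x; [apply: und_Sr xin|rewrite inE xin].
  by move=> h; rewrite -addnS; apply: leq_add.
case: (IH _ _ _ _ (fix_assign P Ir Sr A mu nu) _ Hmu') => [|res hres].
  by rewrite -ltnS; apply: leq_trans lt hn.
by exists res; apply: ea_step nS Hmu' hres.
Qed.
End RunEx.

Require Import Defs.
From mathcomp Require Import all_boot.
From mathcomp Require Import zify.
Set Implicit Arguments.
Unset Strict Implicit.
Unset Printing Implicit Defensive.

Section Lin.
Variable T : finType.
Variable C : rel T.
Hypothesis Ctr : forall x y z, C x y -> C y z -> C x z.
Hypothesis Cirr : forall x, ~~ C x x.

Definition hC x := #|[set y | C x y]|.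
Definition keyC x := (#|T| - hC x) * #|T| + enum_rank x.
Definition lin_of : rel T := fun x y => keyC x < keyC y.

Lemma keyC_inj : injective keyC.
Proof.
move=> x y e; apply: enum_rank_inj; apply: val_inj => /=.
have := congr1 (modn^~ #|T|) e; rewrite /keyC /= !modnMDl !modn_small //.
Qed.

Lemma lin_total : total_order lin_of.
Proof.
rewrite /lin_of; split; first split.
- by move=> x y h; rewrite -leqNgt ltnW.
- by move=> x y z; apply: ltn_trans.
- move=> x y z; rewrite -!leqNgt => h1 h2; exact: leq_trans h2 h1.
- move=> x y nxy; rewrite -neq_ltn; apply: contra nxy => /eqP /keyC_inj ->; by [].
Qed.

Lemma hC_lt x y : C x y -> hC y < hC x.
Proof.
move=> cxy; apply: proper_card; apply/properP; split.
  by apply/subsetP => z; rewrite !inE => cyz; apply: Ctr cxy cyz.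
by exists y; rewrite !inE ?cxy ?(negbTE (Cirr y)).
Qed.

Lemma lin_ext x y : C x y -> lin_of x y.
Proof.
move=> cxy; have h := hC_lt cxy.
have hx : hC x <= #|T| by apply: max_card.
rewrite /lin_of /keyC.
have : #|T| - hC x < #|T| - hC y by lia.
move=> lt; apply: (@leq_trans ((#|T| - hC x).+1 * #|T|)).
  by rewrite mulSn [X in X < _]addnC ltn_add2r ltn_ord.
apply: leq_trans (leq_addr _ _); by rewrite leq_mul2r lt orbT.
Qed.
End Lin.

Section Crel.
Variables (I S : finType) (P : I -> rel (option S)) (q : S -> nat).
Hypothesis HP : forall i, total_order (P i).
Variable pri : S -> rel I.
Hypothesis Hpri : forall s, partial_order (pri s).
Variables (mu nu : {ffun I -> option S}).
Hypothesis Hmu : stable P q pri mu.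
Hypothesis Hnu : stable P q pri nu.
Hypothesis nuR : forall i, Rw P i (nu i) (mu i).
Variable s : S.

Definition pst x y := pri s x y || (x == y).
Definition Uu x := [exists a, (mu a == Some s) && pst x a].
Definition Vv x := [exists a, (nu a == Some s) && pst x a].
Definition Dm y := [exists b, P b (Some s) (mu b) && pst b y].
Definition Dn y := [exists b, P b (Some s) (nu b) && pst b y].
Definition KK := [exists b, [exists c, [&& P b (Some s) (mu b), nu c == Some s & pst b c]]].
Definition Crel : rel I := fun x y =>
  [|| pri s x y, Uu x && Dm y, Vv x && Dn y | [&& Uu x, KK & Dn y]].

Lemma pst_trans x y z : pst x y -> pst y z -> pst x z.
Proof.
rewrite /pst => /orP[h1|/eqP ->] // /orP[h2|/eqP <-]; last by rewrite h1.
by rewrite (pri_trans Hpri h1 h2).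
Qed.

Lemma Uu_up x z : pst x z -> Uu z -> Uu x.
Proof. by move=> h /existsP[a /andP[ma za]]; apply/existsP; exists a; rewrite ma (pst_trans h za). Qed.
Lemma Vv_up x z : pst x z -> Vv z -> Vv x.
Proof. by move=> h /existsP[a /andP[ma za]]; apply/existsP; exists a; rewrite ma (pst_trans h za). Qed.
Lemma Dm_down y z : Dm y -> pst y z -> Dm z.
Proof. by move=> /existsP[b /andP[mb by_]] h; apply/existsP; exists b; rewrite mb (pst_trans by_ h). Qed.
Lemma Dn_down y z : Dn y -> pst y z -> Dn z.
Proof. by move=> /existsP[b /andP[mb by_]] h; apply/existsP; exists b; rewrite mb (pst_trans by_ h). Qed.

Lemma fair_gen (m : {ffun I -> option S}) b a : stable P q pri m ->
  P b (Some s) (m b) -> m a = Some s -> pst b a -> False.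
Proof.
move=> ms Pb ma; rewrite /pst => /orP[pba|/eqP ba].
  exact: (st_fair HP ms (in_setT b) (in_setT s) (isT : allA b s) ma Pb pba).
by move: Pb; rewrite ba ma (negbTE (P_irr HP _ _)).
Qed.

Lemma noUDm y : Dm y -> Uu y -> False.
Proof.
move=> /existsP[b /andP[Pb pby]] /existsP[a /andP[/eqP ma pya]].
exact: fair_gen Hmu Pb ma (pst_trans pby pya).
Qed.
Lemma noVDn y : Dn y -> Vv y -> False.
Proof.
move=> /existsP[b /andP[Pb pby]] /existsP[a /andP[/eqP ma pya]].
exact: fair_gen Hnu Pb ma (pst_trans pby pya).
Qed.
Lemma noUDn y : Dn y -> Uu y -> False.
Proof.
move=> /existsP[b /andP[Pb pby]] /existsP[a /andP[/eqP ma pya]].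
exact: fair_gen Hmu (P_Rw_trans HP Pb (nuR b)) ma (pst_trans pby pya).
Qed.
Lemma DmV_K y : Dm y -> Vv y -> KK.
Proof.
move=> /existsP[b /andP[Pb pby]] /existsP[a /andP[ma pya]].
by apply/existsP; exists b; apply/existsP; exists a; rewrite Pb ma (pst_trans pby pya).
Qed.

Lemma pst_of x y : pri s x y -> pst x y.
Proof. by rewrite /pst => ->. Qed.

Lemma Crel_irr x : ~~ Crel x x.
Proof.
apply/negP; rewrite /Crel => /or4P[h|/andP[u d]|/andP[v d]|/and3P[u _ d]].
- by move: (pri_asym Hpri h); rewrite h.
- exact: noUDm d u.
- exact: noVDn d v.
- exact: noUDn d u.
Qed.

Lemma Crel_trans x y z : Crel x y -> Crel y z -> Crel x z.
Proof.
rewrite /Crel => /or4P[h|/andP[u d]|/andP[v d]|/and3P[u k d]] /or4P[h'|/andP[u' d']|/andP[v' d']|/and3P[u' k' d']].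
all: try by (exfalso; first [exact: noUDm d u' | exact: noVDn d v' | exact: noUDn d u']).
- by rewrite (pri_trans Hpri h h').
- by rewrite (Uu_up (pst_of h) u') d' orbT.
- by rewrite (Vv_up (pst_of h) v') d' !orbT.
- by rewrite (Uu_up (pst_of h) u') k' d' !orbT.
- by rewrite u (Dm_down d (pst_of h')) orbT.
- by rewrite u (DmV_K d v') d' !orbT.
- by rewrite v (Dn_down d (pst_of h')) !orbT.
- by rewrite u k (Dn_down d (pst_of h')) !orbT.
Qed.

Lemma Crel_prof i j : mu_profile P pri mu s i j -> Crel i j.
Proof.
rewrite /mu_profile /Crel => /orP[->//|/andP[mi Pj]].
apply/or4P; apply: Or42; apply/andP; split.
  by apply/existsP; exists i; rewrite mi /pst eqxx orbT.
by apply/existsP; exists j; rewrite Pj /pst eqxx orbT.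
Qed.

Lemma Crel_nu i j : nu i = Some s -> P j (Some s) (nu j) -> Crel i j.
Proof.
move=> ni Pj; rewrite /Crel; apply/or4P; apply: Or43; apply/andP; split.
  by apply/existsP; exists i; rewrite ni eqxx /pst eqxx orbT.
by apply/existsP; exists j; rewrite Pj /pst eqxx orbT.
Qed.
End Crel.

Section Final.
Variables (I S : finType) (P : I -> rel (option S)) (q : S -> nat).
Hypothesis HP : forall i, total_order (P i).

Lemma stab_lift (pri pr : S -> rel I) Is Ss A (m : {ffun I -> option S}) :
  sub_stable P q pri Is Ss A m ->
  (forall s i j, A i s -> m j = Some s -> P i (Some s) (m i) -> ~~ pr s i j) ->
  sub_stable P q pr Is Ss A m.
Proof.
case=> mat ir nw fair h; split => // i j s iI jI sS Ais mj mi Rwi pij.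
have Pi : P i (Some s) (m i) by apply: Rw_P Rwi _; rewrite eq_sym.
by move: (h s i j Ais mj Pi); rewrite pij.
Qed.

Lemma Inv0 (pri pr : S -> rel I) (mu0 : {ffun I -> option S}) :
  Inv P q pri [set: I] [set: S] (@allA I S) mu0 [ffun => None].
Proof.
split.
- by move=> i s; rewrite in_setT.
- by move=> s; rewrite in_setT.
- by move=> i s; rewrite in_setT.
- by move=> i s; rewrite in_setT.
- by move=> i s _; rewrite in_setT.
- by move=> j s i; rewrite in_setT.
- by move=> j s i; rewrite in_setT.
- by [].
- by move=> i j s; rewrite in_setT.
Qed.
End Final.

Theorem corollary6 (I S : finType) (P : I -> rel (option S)) (q : S -> nat)
    (pri : S -> rel I) (mu : {ffun I -> option S}) :
  2 < #|I| ->
  (forall i, total_order (P i)) ->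
  (forall s, 0 < q s) ->
  (forall s, partial_order (pri s)) ->
  stable P q pri mu ->
  forall nu : {ffun I -> option S},
    (SOSM P q pri nu /\ (in_d P q mu nu \/ nu = mu)) <->
    (exists pri' : S -> rel I,
        in_ext (mu_profile P pri mu) pri' /\ EA P q pri pri' nu).
Proof.
move=> _ HP _ Hpri Hmu nu; split.
- case=> Hnu_sosm Hrel.
  have Hnu : stable P q pri nu by case: Hnu_sosm.
  have nuR : forall i, Rw P i (nu i) (mu i).
    by case: Hrel => [[_ [h _]]|->] i; [exact: h (in_setT i)|exact: Rw_refl].
  pose pr := fun s => lin_of (Crel P pri mu nu s).
  have Ctr s x y z := @Crel_trans I S P q HP pri Hpri mu nu Hmu Hnu nuR s x y z.
  have Cirr s x := @Crel_irr I S P q HP pri Hpri mu nu Hmu Hnu nuR s x.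
  have Hpr s : total_order (pr s) by apply: lin_total.
  have Cpr s i j : Crel P pri mu nu s i j -> pr s i j by apply: lin_ext; [apply: Ctr|apply: Cirr].
  have ext : in_ext (mu_profile P pri mu) pr.
    by move=> s; split => // i j h; apply: Cpr; apply: (Crel_prof nu h).
  have Hsub s i j : pri s i j -> pr s i j.
    by move=> h; apply: Cpr; apply: (Crel_prof nu); rewrite /mu_profile h.
  have Hnu' : sub_stable P q pr setT setT (@allA I S) nu.
    apply: stab_lift Hnu _ => s i j _ nj Pi; apply/negP => pij.
    by move: (to_asym (Hpr s) pij); rewrite (Cpr _ _ _ (Crel_nu pri mu nj Pi)).
  case: (SOSM_exists q HP [set: I] [set: S] (@allA I S) Hpr) => mu0 Hmu0.
  case: (@run_exists I S P q HP pri pr Hpr _ [set: I] [set: S] (@allA I S) mu0 [ffun => None] (leqnn _) Hmu0) => res hres.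
  case: (ea_props HP Hpri Hpr Hsub hres Hmu0 (Inv0 P q pri pr mu0)) => rs rR _ _.
  have resR i : Rw P i (res i) (nu i).
    exact: (Rw_trans HP (rR i (in_setT i)) (SOSM_opt HP Hpr Hmu0 Hnu' i)).
  have e : res = nu.
    apply/ffunP => i; apply/eqP/contraT => ne; exfalso.
    case: Hnu_sosm => _ nd; apply: (nd res rs); split; first by move=> k _; apply: resR.
    by exists i; [apply: in_setT|apply: Rw_P (resR i) ne].
  exists pr; split => //; exists mu0; split => //; by rewrite -e.
- case=> pr [ext [mu0 [Hmu0 hrun]]].
  have Hpr s : total_order (pr s) by case: (ext s).
  have Hsub s i j : pri s i j -> pr s i j by move=> h; case: (ext s) => _; apply; rewrite /mu_profile h.
  case: (ea_props HP Hpri Hpr Hsub hrun Hmu0 (Inv0 P q pri pr mu0)) => rs rR _ rC.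
  have Hmu' : sub_stable P q pr setT setT (@allA I S) mu.
    apply: stab_lift Hmu _ => s i j _ mj Pi; apply/negP => pij.
    have : pr s j i by case: (ext s) => _; apply; rewrite /mu_profile mj eqxx Pi orbT.
    by move/(to_asym (Hpr s)); rewrite pij.
  have nR i : Rw P i (nu i) (mu i).
    exact: (Rw_trans HP (rR i (in_setT i)) (SOSM_opt HP Hpr Hmu0 Hmu' i)).
  split.
    split => // m' m's [h [i _ Pi]].
    have off : forall k, k \notin [set: I] -> m' k = ([ffun => None] : {ffun I -> option S}) k.
      by move=> k; rewrite in_setT.
    have e := rC m' m's (fun k => h k (in_setT k)) off.
    by move: Pi; rewrite e (negbTE (P_irr HP _ _)).
  case: (eqVneq nu mu) => [->|ne]; [by right|left].
  split; first by case: rs.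
  split; first by move=> i _; apply: nR.
  have [i ni] : exists i, nu i != mu i.
    apply/existsP; apply/contraT; rewrite negb_exists => /forallP h.
    by move: ne; rewrite (_ : nu = mu) ?eqxx //; apply/ffunP => i; apply/eqP; move: (h i); rewrite negbK.
  by exists i; [apply: in_setT|apply: Rw_P (nR i) ni].
Qed.
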